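(* For every integer $m\ge3$, $\{1,m\}\notin\mathcal{I}_1$; that is, there is no interval-filling summable sequence of positive reals whose cardinal function has range exactly $\{1,m\}$.
   Context: For a summable sequence $\mathbf{x}=(x_n)$ of positive reals, $\mathcal{A}(\mathbf{x})=\{\sum_{n\in A}x_n: A\subseteq\mathbb{N}\}$ is its achievement set and its cardinal function $f$ assigns to $x\in\mathcal{A}(\mathbf{x})$ the cardinality (a positive integer, $\omega$, or $\mathfrak{c}$) of $\{(\varepsilon_n)\in\{0,1\}^{\mathbb{N}}:\sum\varepsilon_nx_n=x\}$. A sequence is interval-filling if its achievement set is an interval. $\mathcal{I}_1$ is the family of ranges of cardinal functions of interval-filling sequences. *)

(* Defs.v *)
From Stdlib Require Import Reals List.
Open Scope R_scope.

Definition summable (x : nat -> R) : Prop := exists l : R, infinite_sum x l.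

(* eps (a 0-1 sequence, i.e. the indicator of A ⊆ ℕ) represents v:
   sum_n eps_n x_n = v. *)
Definition represents (x : nat -> R) (v : R) (eps : nat -> bool) : Prop :=
  infinite_sum (fun n => if eps n then x n else 0) v.

Definition achievement_set (x : nat -> R) (v : R) : Prop :=
  exists eps : nat -> bool, represents x v eps.

Definition has_card (P : (nat -> bool) -> Prop) (k : nat) : Prop :=
  exists l : list (nat -> bool),
    NoDup l /\ length l = k /\ forall e, P e <-> In e l.

Definition interval_filling (x : nat -> R) : Prop :=
  forall a b c, achievement_set x a -> achievement_set x b ->
    a <= c <= b -> achievement_set x c.

(* The range of the cardinal function f of x equals the set S of positive
   integers (in particular no value ω or 𝔠 is attained). *)
Definition cardinal_range_is (x : nat -> R) (S : nat -> Prop) : Prop :=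
  (forall v, achievement_set x v ->
     exists k, S k /\ has_card (represents x v) k) /\
  (forall k, S k ->
     exists v, achievement_set x v /\ has_card (represents x v) k).

(* Main.v *)
Require Import Defs.
From Stdlib Require Import Reals List.
Open Scope R_scope.
From Stdlib Require Import Lia Lra FunctionalExtensionality Bool ClassicalEpsilon Classical.
From Coquelicot Require Import Coquelicot.
Open Scope R_scope.
Local Open Scope bool_scope.

Definition mk (x : nat -> R) (e : nat -> bool) (n : nat) : R := if e n then x n else 0.
Definition msum x e := Series (mk x e).
Definition hyp (x : nat -> R) := (forall n, 0 < x n) /\ ex_series x.

Lemma mk_nonneg x e n : hyp x -> 0 <= mk x e n.
Proof. intros [H _]. unfold mk; destruct (e n); [apply Rlt_le, H| lra]. Qed.

Lemma mk_le x e n : hyp x -> mk x e n <= x n.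
Proof. intros [H _]. unfold mk; destruct (e n); [lra| apply Rlt_le, H]. Qed.

Lemma ex_mk x e : hyp x -> ex_series (mk x e).
Proof.
  intros Hh. apply (@ex_series_le R_AbsRing R_CompleteNormedModule _ x).
  - intros n. change (Rabs (mk x e n) <= x n).
    rewrite Rabs_pos_eq by (apply mk_nonneg; auto). apply mk_le; auto.
  - apply Hh.
Qed.

Lemma msum_le x e e' : hyp x -> (forall n, e n = true -> e' n = true) -> msum x e <= msum x e'.
Proof.
  intros Hh He. unfold msum. apply Series_le; [|apply ex_mk; auto].
  intros n. split; [apply mk_nonneg; auto|]. unfold mk.
  destruct (e n) eqn:E; [rewrite He; auto; lra|]. destruct (e' n); [apply Rlt_le, Hh| lra].
Qed.


Lemma msum_ext x e e' : (forall n, e n = e' n) -> msum x e = msum x e'.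
Proof. intros H. unfold msum. apply Series_ext. intros n. unfold mk. rewrite H. auto. Qed.

Lemma msum_disj x e1 e2 : hyp x -> (forall n, e1 n && e2 n = false) ->
  msum x (fun n => e1 n || e2 n) = msum x e1 + msum x e2.
Proof.
  intros Hh Hd. unfold msum. rewrite <- Series_plus by (apply ex_mk; auto).
  apply Series_ext. intros n. unfold mk. specialize (Hd n).
  destruct (e1 n), (e2 n); simpl in *; try discriminate; lra.
Qed.

Lemma msum_fin x e N : (forall n, (n > N)%nat -> e n = false) -> msum x e = sum_f_R0 (mk x e) N.
Proof.
  intros H. unfold msum. apply is_series_unique. apply is_series_Reals.
  intros eps Heps. exists N. intros n Hn. unfold R_dist.
  replace (sum_f_R0 (mk x e) n) with (sum_f_R0 (mk x e) N). rewrite Rminus_diag, Rabs_R0; auto.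
  induction Hn; auto. simpl. rewrite IHHn. unfold mk. rewrite H by lia. lra.
Qed.

Lemma msum_false x : msum x (fun _ => false) = 0.
Proof. rewrite (msum_fin x _ 0) by auto. simpl. unfold mk. auto. Qed.

Lemma msum_single_opt x e k : msum x (fun n => e n && Nat.eqb n k) = mk x e k.
Proof.
  rewrite (msum_fin x _ k).
  2:{ intros n Hn. destruct (Nat.eqb_spec n k); [lia| apply andb_false_r]. }
  destruct k. simpl. unfold mk. simpl. destruct (e 0%nat); auto.
  simpl. rewrite sum_eq_R0. unfold mk. rewrite Nat.eqb_refl, andb_true_r. lra.
  intros n Hn. unfold mk. destruct (Nat.eqb_spec n (S k)); [lia|]. rewrite andb_false_r; auto.
Qed.

Lemma msum_single x k : msum x (fun n => Nat.eqb n k) = x k.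
Proof.
  rewrite (msum_ext x _ (fun n => (fun _ => true) n && Nat.eqb n k)) by auto.
  rewrite msum_single_opt. reflexivity.
Qed.

Lemma msum_nonneg x e : hyp x -> 0 <= msum x e.
Proof. intros Hh. rewrite <- (msum_false x). apply msum_le; auto; discriminate. Qed.

Lemma msum_ge_single x e k : hyp x -> e k = true -> x k <= msum x e.
Proof.
  intros Hh Hk. rewrite <- msum_single. apply msum_le; auto.
  intros n Hn. destruct (Nat.eqb_spec n k); subst; auto; discriminate.
Qed.

Lemma represents_msum x v e : hyp x -> (infinite_sum (mk x e) v <-> msum x e = v).
Proof.
  intros Hh. split.
  - intros H. apply is_series_unique, is_series_Reals, H.
  - intros <-. apply is_series_Reals, Series_correct, ex_mk; auto.
Qed.

Lemma msum_prefix x n : msum x (fun k => Nat.ltb k (S n)) = sum_f_R0 x n.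
Proof.
  rewrite (msum_fin x _ n).
  2:{ intros k Hk. apply Nat.ltb_ge. lia. }
  apply sum_eq. intros i Hi. unfold mk. replace (Nat.ltb i (S n)) with true; auto.
  symmetry; apply Nat.ltb_lt; lia.
Qed.

Lemma msum_split x e n : hyp x ->
  msum x e = msum x (fun k => e k && Nat.ltb k n) + msum x (fun k => e k && Nat.leb n k).
Proof.
  intros Hh. rewrite <- msum_disj; auto.
  - apply msum_ext. intros k. destruct (e k); simpl; auto.
    destruct (Nat.ltb_spec k n), (Nat.leb_spec n k); auto; lia.
  - intros k. destruct (e k); simpl; auto.
    destruct (Nat.ltb_spec k n), (Nat.leb_spec n k); auto; lia.
Qed.

Lemma tail_small x : hyp x -> forall eps, 0 < eps -> exists N, forall n, (n >= N)%nat ->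
  msum x (fun k => Nat.leb n k) < eps.
Proof.
  intros Hh eps Heps.
  assert (Hc : infinite_sum x (msum x (fun _ => true))).
  { apply is_series_Reals. unfold msum.
    rewrite (Series_ext _ x) by (intros; reflexivity). apply Series_correct, Hh. }
  destruct (Hc eps Heps) as [N HN]. exists (S N). intros n Hn.
  destruct n as [|n]; [lia|].
  specialize (HN n ltac:(lia)). unfold R_dist in HN.
  rewrite (msum_split x (fun _ => true) (S n)) in HN by auto.
  rewrite (msum_ext x (fun k => true && Nat.ltb k (S n)) (fun k => Nat.ltb k (S n))) in HN by auto.
  rewrite (msum_ext x (fun k => true && Nat.leb (S n) k) (fun k => Nat.leb (S n) k)) in HN by auto.
  rewrite msum_prefix in HN.
  pose proof (msum_nonneg x (fun k => Nat.leb (S n) k) Hh).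
  rewrite Rabs_left1 in HN; lra.
Qed.

Lemma agree_bound x e e' n : hyp x -> (forall k, (k < n)%nat -> e k = e' k) ->
  Rabs (msum x e - msum x e') <= msum x (fun k => Nat.leb n k).
Proof.
  intros Hh Ha.
  rewrite (msum_split x e n), (msum_split x e' n) by auto.
  replace (msum x (fun k => e' k && Nat.ltb k n)) with (msum x (fun k => e k && Nat.ltb k n)).
  2:{ apply msum_ext. intros k. destruct (Nat.ltb_spec k n); [rewrite Ha; auto|].
      rewrite !andb_false_r; auto. }
  assert (H1 : msum x (fun k => e k && Nat.leb n k) <= msum x (fun k => Nat.leb n k)).
  { apply msum_le; auto. intros k Hk. apply andb_true_iff in Hk. tauto. }
  assert (H2 : msum x (fun k => e' k && Nat.leb n k) <= msum x (fun k => Nat.leb n k)).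
  { apply msum_le; auto. intros k Hk. apply andb_true_iff in Hk. tauto. }
  pose proof (msum_nonneg x (fun k => e k && Nat.leb n k) Hh).
  pose proof (msum_nonneg x (fun k => e' k && Nat.leb n k) Hh).
  apply Rabs_le. lra.
Qed.

Definition ltb (a b : R) : bool := if Rlt_dec a b then true else false.
Definition sub (e M : nat -> bool) := forall n, e n = true -> M n = true.
Definition achM x M t := exists e, sub e M /\ msum x e = t.
Definition gapc x M := forall c, 0 < c -> c <= msum x M -> c <= msum x (fun k => M k && ltb (x k) c).

Definition upd (p : nat -> bool) n := fun k => if Nat.eqb k n then true else p k.
Fixpoint build (P : nat -> (nat -> bool) -> Prop) (n : nat) : nat -> bool :=
  match n with
  | O => fun _ => false
  | S n => if excluded_middle_informative (P (S n) (upd (build P n) n))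
           then upd (build P n) n else build P n
  end.

Lemma build_high P n k : (k >= n)%nat -> build P n k = false.
Proof.
  induction n; simpl; auto. intros Hk.
  destruct (excluded_middle_informative _); auto; [|apply IHn; lia].
  unfold upd. destruct (Nat.eqb_spec k n); [lia|]. apply IHn; lia.
Qed.

Lemma build_stable P n k : (k < n)%nat -> build P (S n) k = build P n k.
Proof.
  intros Hk. simpl. destruct (excluded_middle_informative _); auto.
  unfold upd. destruct (Nat.eqb_spec k n); [lia|]. auto.
Qed.

Lemma build_lim P n k : (k < n)%nat -> build P n k = build P (S k) k.
Proof.
  induction n; intros Hk; [lia|].
  destruct (Nat.eq_dec k n); [subst; auto|].
  rewrite build_stable by lia. apply IHn; lia.
Qed.

Lemma closure x M t : hyp x ->
  (forall d, 0 < d -> exists e, sub e M /\ Rabs (msum x e - t) < d) -> achM x M t.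
Proof.
  intros Hh Happ.
  set (good := fun n (p : nat -> bool) => forall d, 0 < d -> exists e, sub e M /\
      (forall k, (k < n)%nat -> e k = p k) /\ Rabs (msum x e - t) < d).
  assert (Hg : forall n, good n (build good n)).
  { induction n.
    - intros d Hd. destruct (Happ d Hd) as [e [He1 He2]]. exists e. repeat split; auto. intros; lia.
    - simpl. destruct (excluded_middle_informative _) as [G|G]; auto.
      assert (Hd1 : exists d1, 0 < d1 /\ forall e, sub e M -> (forall k, (k < S n)%nat ->
                 e k = upd (build good n) n k) -> Rabs (msum x e - t) >= d1).
      { apply NNPP. intros C. apply G. intros d Hd. apply NNPP. intros C2. apply C.
        exists d. split; auto. intros e He Ha. apply Rnot_lt_ge. intros Hlt. apply C2.
        exists e. auto. }
      destruct Hd1 as [d1 [Hd1 Hd1']].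
      intros d Hd. destruct (IHn (Rmin d d1) (Rmin_pos _ _ Hd Hd1)) as [e [He [Ha Hc]]].
      exists e. split; auto. split.
      + intros k Hk. destruct (Nat.eq_dec k n).
        * subst. rewrite build_high by lia. destruct (e n) eqn:En; auto.
          exfalso. specialize (Hd1' e He). 
          assert (Rabs (msum x e - t) >= d1).
          { apply Hd1'. intros k Hk'. unfold upd. destruct (Nat.eqb_spec k n); [subst; auto|].
            apply Ha; lia. }
          pose proof (Rmin_r d d1). lra.
        * apply Ha; lia.
      + pose proof (Rmin_l d d1). lra. }
  set (e := fun k => build good (S k) k).
  exists e. split.
  - intros k Hk. destruct (Hg (S k) 1 Rlt_0_1) as [e' [He' [Ha _]]].
    apply He'. rewrite Ha by lia. exact Hk.
  - apply NNPP. intros Hne.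
    assert (Hpos : 0 < Rabs (msum x e - t)) by (apply Rabs_pos_lt; lra).
    set (q := Rabs (msum x e - t)) in *.
    destruct (tail_small x Hh (q/2) ltac:(lra)) as [N HN].
    destruct (Hg N (q/2) ltac:(lra)) as [e' [He' [Ha Hc]]].
    pose proof (agree_bound x e e' N Hh) as Hb.
    assert (Rabs (msum x e - msum x e') <= msum x (fun k => Nat.leb N k)).
    { apply Hb. intros k Hk. rewrite Ha by auto. unfold e. symmetry. apply build_lim; auto. }
    specialize (HN N (le_n N)).
    assert (q <= Rabs (msum x e - msum x e') + Rabs (msum x e' - t)).
    { unfold q. replace (msum x e - t) with ((msum x e - msum x e') + (msum x e' - t)) by ring.
      apply Rabs_triang. }
    lra.
Qed.

Lemma list_min x (l : list nat) : l <> nil -> exists b, In b l /\ forall j, In j l -> x b <= x j.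
Proof.
  induction l as [|a l IH]; intros H; [congruence|].
  destruct l as [|c l'].
  - exists a. split; [left; auto|]. intros j [->|[]]. lra.
  - destruct IH as [b [Hb1 Hb2]]; [discriminate|].
    destruct (Rle_dec (x a) (x b)).
    + exists a. split; [left; auto|]. intros j [->|Hj]; [lra|]. specialize (Hb2 j Hj). lra.
    + exists b. split; [right; auto|]. intros j [->|Hj]; [lra|]. auto.
Qed.

Lemma claimC x M : hyp x -> gapc x M -> forall n (l : list nat), (length l <= n)%nat ->
  forall B, (forall k, B k = true <-> In k l) -> sub B M ->
  (forall k j, M k = true -> B k = false -> B j = true -> x k <= x j) ->
  forall t, 0 <= t <= msum x M -> exists F, sub F B /\ msum x F <= t /\
    t <= msum x F + msum x (fun k => M k && negb (B k)).
Proof.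
  intros Hh Hgap n. induction n as [|n IH]; intros l Hl B HB HBM Hup t Ht.
  - destruct l; [|simpl in Hl; lia].
    exists (fun _ => false). split; [intros k Hk; discriminate|].
    rewrite msum_false. rewrite (msum_ext x _ M). lra.
    intros k. destruct (B k) eqn:E; [apply HB in E; destruct E|]. destruct (M k); auto.
  - destruct l as [|a l0].
    + exists (fun _ => false). split; [intros k Hk; discriminate|].
      rewrite msum_false. rewrite (msum_ext x _ M). lra.
      intros k. destruct (B k) eqn:E; [apply HB in E; destruct E|]. destruct (M k); auto.
    + set (l := a :: l0) in *.
      destruct (list_min x l) as [b [Hb Hbmin]]; [discriminate|].
      set (l' := remove Nat.eq_dec b l).
      assert (Hl' : (length l' <= n)%nat).
      { pose proof (remove_length_lt Nat.eq_dec l b Hb). unfold l'. lia. }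
      set (B' := fun k => B k && negb (Nat.eqb k b)).
      assert (HB' : forall k, B' k = true <-> In k l').
      { intros k. unfold B', l'. rewrite andb_true_iff, negb_true_iff, Nat.eqb_neq, HB.
        split.
        - intros [H1 H2]. apply in_in_remove; auto.
        - intros H. apply in_remove in H. tauto. }
      assert (HBb : B b = true) by (apply HB; auto).
      assert (HMb : M b = true) by (apply HBM; auto).
      destruct (IH l' Hl' B' HB') with (t := t) as [F' [HF'1 [HF'2 HF'3]]]; auto.
      { intros k Hk. apply HBM. unfold B' in Hk. apply andb_true_iff in Hk. tauto. }
      { intros k j Hk Hk' Hj. unfold B' in Hk', Hj.
        apply andb_true_iff in Hj. destruct Hj as [Hj _].
        destruct (B k) eqn:E.
        - simpl in Hk'. apply negb_false_iff, Nat.eqb_eq in Hk'. subst k.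
          apply Hbmin, HB, Hj.
        - apply (Hup k j); auto. }
      assert (Heq : msum x (fun k => M k && negb (B' k)) =
                    msum x (fun k => M k && negb (B k)) + x b).
      { rewrite <- (msum_single x b). rewrite <- msum_disj; auto.
        - apply msum_ext. intros k. unfold B'. destruct (Nat.eqb_spec k b).
          + subst. rewrite HMb, HBb. auto.
          + simpl. rewrite andb_true_r, orb_false_r. auto.
        - intros k. destruct (Nat.eqb_spec k b); [subst; rewrite HBb|]; simpl;
            rewrite ?andb_false_r; auto. }
      rewrite Heq in HF'3.
      destruct (Rle_dec t (msum x F' + msum x (fun k => M k && negb (B k)))).
      * exists F'. split; [|lra]. intros k Hk. specialize (HF'1 k Hk). unfold B' in HF'1.
        apply andb_true_iff in HF'1. tauto.
      * exists (fun k => F' k || Nat.eqb k b).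
        assert (HFb : F' b = false).
        { destruct (F' b) eqn:E; auto. specialize (HF'1 b E). unfold B' in HF'1.
          rewrite Nat.eqb_refl, andb_false_r in HF'1. discriminate. }
        rewrite msum_disj; auto.
        2:{ intros k. destruct (Nat.eqb_spec k b); [subst; rewrite HFb|]; simpl;
            rewrite ?andb_false_r; auto. }
        rewrite msum_single. split.
        { intros k Hk. apply orb_true_iff in Hk. destruct Hk as [Hk|Hk].
          - specialize (HF'1 k Hk). unfold B' in HF'1. apply andb_true_iff in HF'1. tauto.
          - apply Nat.eqb_eq in Hk. subst. auto. }
        assert (Hxb : x b <= msum x (fun k => M k && negb (B k))).
        { assert (Hg := Hgap (x b) (proj1 Hh b)).
          assert (x b <= msum x M) by (apply msum_ge_single; auto).
          specialize (Hg H).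
          eapply Rle_trans; [apply Hg|]. apply msum_le; auto.
          intros k Hk. apply andb_true_iff in Hk. destruct Hk as [Hk1 Hk2].
          rewrite Hk1. simpl. destruct (B k) eqn:E; auto.
          unfold ltb in Hk2. destruct (Rlt_dec (x k) (x b)); [|discriminate].
          assert (In k l) by (apply HB; auto). specialize (Hbmin k H0). lra. }
        lra.
Qed.

Lemma x_small x : hyp x -> forall d, 0 < d -> exists N, forall k, (k >= N)%nat -> x k < d.
Proof.
  intros Hh d Hd. destruct (tail_small x Hh d Hd) as [N HN]. exists N. intros k Hk.
  eapply Rle_lt_trans; [|apply (HN N (le_n N))]. apply msum_ge_single; auto.
  apply Nat.leb_le; auto.
Qed.

Lemma prefix_find x Sm d r : hyp x -> 0 < d -> (forall k, Sm k = true -> x k < d) ->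
  0 <= r <= msum x Sm -> exists n, msum x (fun k => Sm k && Nat.ltb k n) <= r <
                                   msum x (fun k => Sm k && Nat.ltb k n) + d.
Proof.
  intros Hh Hd Hs Hr. set (P := fun n => msum x (fun k => Sm k && Nat.ltb k n)).
  apply NNPP. intros C.
  assert (HS : forall n, P (S n) = P n + mk x Sm n).
  { intros n. unfold P. rewrite <- msum_single_opt. rewrite <- msum_disj; auto.
    - apply msum_ext. intros k. destruct (Sm k); simpl; auto.
      destruct (Nat.ltb_spec k (S n)), (Nat.ltb_spec k n), (Nat.eqb_spec k n); auto; lia.
    - intros k. destruct (Sm k); simpl; auto.
      destruct (Nat.ltb_spec k n), (Nat.eqb_spec k n); auto; lia. }
  assert (Hall : forall n, P n + d <= r).
  { induction n.
    - assert (P 0%nat = 0).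
      { unfold P. rewrite <- (msum_false x). apply msum_ext. intros k.
        destruct (Sm k); auto. }
      apply Rnot_lt_le. intros Hlt. apply C. exists 0%nat. fold (P 0%nat). lra.
    - assert (mk x Sm n < d).
      { unfold mk. destruct (Sm n) eqn:E; auto. }
      rewrite HS in *.
      apply Rnot_lt_le. intros Hlt. apply C. exists (S n). fold (P (S n)). rewrite HS. lra. }
  destruct (tail_small x Hh d Hd) as [N HN]. specialize (HN N (le_n N)).
  specialize (Hall N).
  assert (msum x Sm <= P N + msum x (fun k => Nat.leb N k)).
  { rewrite (msum_split x Sm N) by auto. unfold P.
    apply Rplus_le_compat_l. apply msum_le; auto. intros k Hk.
    apply andb_true_iff in Hk. tauto. }
  lra.
Qed.

Lemma density x M : hyp x -> gapc x M -> forall d t, 0 < d -> 0 <= t <= msum x M ->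
  exists e, sub e M /\ t - d < msum x e <= t.
Proof.
  intros Hh Hgap d t Hd Ht.
  destruct (x_small x Hh d Hd) as [N HN].
  set (B := fun k => M k && negb (ltb (x k) d)).
  set (l := filter B (seq 0 N)).
  assert (HB : forall k, B k = true <-> In k l).
  { intros k. unfold l. rewrite filter_In, in_seq. split; [|tauto].
    intros Hk. split; auto. split; [lia|].
    destruct (Nat.lt_ge_cases k N); [lia|]. exfalso. specialize (HN k H).
    unfold B, ltb in Hk. destruct (Rlt_dec (x k) d); [|contradiction].
    rewrite andb_false_r in Hk. discriminate. }
  destruct (claimC x M Hh Hgap (length l) l (le_n _) B HB) with (t := t)
    as [F [HF1 [HF2 HF3]]]; auto.
  { intros k Hk. unfold B in Hk. apply andb_true_iff in Hk. tauto. }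
  { intros k j Hk Hk' Hj. unfold B, ltb in Hk', Hj. rewrite Hk in Hk'.
    apply andb_true_iff in Hj. destruct Hj as [_ Hj].
    destruct (Rlt_dec (x j) d); [discriminate|].
    destruct (Rlt_dec (x k) d); [lra| discriminate]. }
  set (Sm := fun k => M k && negb (B k)) in *.
  assert (HSm : forall k, Sm k = true -> x k < d).
  { intros k Hk. unfold Sm, B, ltb in Hk. destruct (M k); [|discriminate].
    destruct (Rlt_dec (x k) d); auto. discriminate. }
  destruct (prefix_find x Sm d (t - msum x F) Hh Hd HSm) as [n Hn]; [lra|].
  exists (fun k => F k || (Sm k && Nat.ltb k n)).
  assert (Hdisj : forall k, F k && (Sm k && Nat.ltb k n) = false).
  { intros k. destruct (F k) eqn:E; auto. simpl. specialize (HF1 k E).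
    unfold Sm. rewrite HF1. simpl. rewrite andb_false_r; auto. }
  rewrite msum_disj; auto. split; [|lra].
  intros k Hk. apply orb_true_iff in Hk. destruct Hk as [Hk|Hk].
  - specialize (HF1 k Hk). unfold B in HF1. apply andb_true_iff in HF1. tauto.
  - unfold Sm in Hk. apply andb_true_iff in Hk. destruct Hk as [Hk _].
    apply andb_true_iff in Hk. tauto.
Qed.

Lemma kakeya x M : hyp x -> gapc x M -> forall t, 0 <= t <= msum x M -> achM x M t.
Proof.
  intros Hh Hg t Ht. apply closure; auto.
  intros d Hd. destruct (density x M Hh Hg d t Hd Ht) as [e [He1 He2]].
  exists e. split; auto. apply Rabs_def1; lra.
Qed.

Lemma card_ge (P : (nat -> bool) -> Prop) a l : has_card P a -> NoDup l ->
  (forall u, In u l -> P u) -> (length l <= a)%nat.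
Proof.
  intros [lp [Hnd [Hlen Hiff]]] Hl HP. subst a. apply NoDup_incl_length; auto.
  intros u Hu. apply Hiff, HP, Hu.
Qed.

Lemma nodup_map_inj {A B : Type} (g : A -> B) l : NoDup l ->
  (forall u v, In u l -> In v l -> g u = g v -> u = v) -> NoDup (map g l).
Proof. intros H1 H2. apply NoDup_map_NoDup_ForallPairs; [intros a b Ha Hb; apply H2; auto | auto]. Qed.

Lemma avoid x e v p : hyp x -> msum x e = v -> v < x p -> e p = false.
Proof.
  intros Hh He Hv. destruct (e p) eqn:E; auto. pose proof (msum_ge_single x e p Hh E). lra.
Qed.

Lemma single_rep x u p : hyp x -> u p = true -> msum x u = x p -> u = (fun n => Nat.eqb n p).
Proof.
  intros Hh Hp Hs. apply functional_extensionality. intros k.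
  destruct (Nat.eqb_spec k p); [subst; auto|].
  destruct (u k) eqn:E; auto. exfalso.
  assert (msum x (fun n => Nat.eqb n p || Nat.eqb n k) <= msum x u).
  { apply msum_le; auto. intros j Hj. apply orb_true_iff in Hj.
    destruct Hj as [Hj|Hj]; apply Nat.eqb_eq in Hj; subst; auto. }
  rewrite msum_disj in H; auto.
  - rewrite !msum_single in H. pose proof (proj1 Hh k). lra.
  - intros j. destruct (Nat.eqb_spec j p), (Nat.eqb_spec j k); subst; auto; congruence.
Qed.


Theorem theorem3p6 (m : nat) (hm : (3 <= m)%nat) :
  ~ exists x : nat -> R,
      (forall n, 0 < x n) /\ summable x /\ interval_filling x /\
      cardinal_range_is x (fun k => k = 1%nat \/ k = m).
Proof.
  intros [x [Hpos [Hsum [Hint [Hc1 Hc2]]]]].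
  assert (Hh : hyp x).
  { split; auto. destruct Hsum as [l Hl]. exists l. apply is_series_Reals, Hl. }
  assert (Hrep : forall v e, represents x v e <-> msum x e = v).
  { intros v e. apply (represents_msum x v e Hh). }
  set (SS := msum x (fun _ => true)).
  assert (Hach : forall t, 0 <= t <= SS -> achievement_set x t).
  { intros t Ht. apply (Hint 0 SS t).
    - exists (fun _ => false). apply Hrep, msum_false.
    - exists (fun _ => true). apply Hrep. reflexivity.
    - exact Ht. }
  assert (Hcard : forall t, 0 <= t <= SS -> exists k, (k = 1%nat \/ k = m) /\
                     has_card (represents x t) k).
  { intros t Ht. apply Hc1, Hach, Ht. }
  assert (HleS : forall e, msum x e <= SS).
  { intros e. apply msum_le; auto. }
  assert (Hgap : forall c, 0 < c -> c <= SS -> c <= msum x (fun k => ltb (x k) c)).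
  { intros c Hc HcS. apply Rnot_lt_le. intros HL.
    set (L := msum x (fun k => ltb (x k) c)) in *.
    pose proof (msum_nonneg x (fun k => ltb (x k) c) Hh).
    destruct (Hach ((L + c) / 2)) as [e He]; [fold L in H; lra|].
    apply Hrep in He.
    destruct (classic (exists k, e k = true /\ ~ x k < c)) as [[k [Hk1 Hk2]]|Hno].
    - pose proof (msum_ge_single x e k Hh Hk1). lra.
    - assert (msum x e <= L).
      { apply msum_le; auto. intros k Hk. unfold ltb.
        destruct (Rlt_dec (x k) c); auto. exfalso. apply Hno. exists k. auto. }
      fold L in H; lra. }
  destruct (x_small x Hh (x 0%nat) (Hpos 0%nat)) as [N0 HN0].
  destruct (list_min (fun k => - x k) (seq 0 (S N0))) as [p [Hp1 Hp2]].
  { simpl. discriminate. }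
  assert (Hmax : forall k, x k <= x p).
  { intros k. destruct (Nat.lt_ge_cases k (S N0)).
    - specialize (Hp2 k ltac:(apply in_seq; lia)). lra.
    - specialize (Hp2 0%nat ltac:(apply in_seq; lia)). specialize (HN0 k ltac:(lia)). lra. }
  set (T := msum x (fun k => negb (Nat.eqb k p))).
  assert (HST : SS = T + x p).
  { unfold SS, T. rewrite <- msum_single, <- msum_disj; auto.
    - apply msum_ext. intros k. destruct (Nat.eqb k p); auto.
    - intros k. destruct (Nat.eqb k p); auto. }
  assert (HTp : x p <= T).
  { assert (x p <= msum x (fun k => ltb (x k) (x p))).
    { apply Hgap; auto. rewrite HST. pose proof (msum_nonneg x (fun k => negb (Nat.eqb k p)) Hh). fold T in H. lra. }
    eapply Rle_trans; [apply H|]. apply msum_le; auto. intros k Hk.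
    unfold ltb in Hk. destruct (Rlt_dec (x k) (x p)); [|discriminate].
    destruct (Nat.eqb_spec k p); [subst; lra|auto]. }
  assert (Hsp : msum x (fun n => Nat.eqb n p) = x p) by apply msum_single.
  destruct (Rlt_le_dec T (2 * x p)) as [Hc|Hc].
  -
    set (v1 := T - x p).
    destruct (Hcard v1) as [a [Ha Hca]]; [unfold v1; lra|].
    destruct (Hcard (x p)) as [b [Hb Hcb]]; [pose proof (msum_nonneg x (fun _ => true) Hh); fold SS in H; split; [apply Rlt_le, Hpos|lra]|].
    set (comp := fun (e : nat -> bool) n => negb (e n) && negb (Nat.eqb n p)).
    assert (Hcomp : forall e, e p = false -> msum x e + msum x (comp e) = T).
    { intros e Hep. rewrite <- msum_disj; auto.
      - apply msum_ext. intros k. unfold comp. destruct (Nat.eqb_spec k p); [subst; rewrite Hep; auto|].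
        destruct (e k); auto.
      - intros k. unfold comp. destruct (e k); auto. }
    assert (Hinj : forall e e', e p = false -> e' p = false -> comp e = comp e' -> e = e').
    { intros e e' H1 H2 H3. apply functional_extensionality. intros k.
      destruct (Nat.eqb_spec k p); [subst; congruence|].
      assert (H4 := f_equal (fun f => f k) H3). unfold comp in H4. simpl in H4.
      destruct (Nat.eqb_spec k p); [lia|]. simpl in H4. rewrite !andb_true_r in H4.
      destruct (e k), (e' k); auto; discriminate. }
    assert (Hab : (a + 1 <= b)%nat).
    { destruct Hca as [la [Hnd [Hlen Hiff]]].
      assert (Hav : forall e, In e la -> e p = false).
      { intros e He. apply Hiff, Hrep in He. apply (avoid x e v1 p Hh He). unfold v1; lra. }
      replace (a + 1)%nat with (length ((fun n => Nat.eqb n p) :: map comp la))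
        by (simpl; rewrite length_map; lia).
      apply (card_ge _ _ _ Hcb).
      - constructor.
        + intros Hin. apply in_map_iff in Hin. destruct Hin as [e [He1 He2]].
          assert (H5 := f_equal (fun f => f p) He1). unfold comp in H5. simpl in H5.
          rewrite Nat.eqb_refl, andb_false_r in H5. discriminate.
        + apply nodup_map_inj; [assumption|]. intros u v Hu Hv. apply Hinj; auto.
      - intros u [<-|Hu]; apply Hrep; auto.
        apply in_map_iff in Hu. destruct Hu as [e [<- He]].
        pose proof (Hcomp e (Hav e He)). apply Hiff, Hrep in He. unfold v1 in He. lra. }
    assert (Hba : (b <= a + 1)%nat).
    { destruct Hcb as [lb [Hnd [Hlen Hiff]]].
      assert (Hin : In (fun n => Nat.eqb n p) lb) by (apply Hiff, Hrep, Hsp).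
      apply in_split in Hin. destruct Hin as [l1 [l2 Hl]].
      rewrite Hl in Hnd. pose proof (NoDup_remove_1 _ _ _ Hnd) as Hnd'.
      pose proof (NoDup_remove_2 _ _ _ Hnd) as Hnot.
      assert (Hav : forall u, In u (l1 ++ l2) -> u p = false /\ msum x u = x p).
      { intros u Hu. assert (Hu' : In u lb) by (rewrite Hl; apply in_app_or in Hu; apply in_or_app;
          destruct Hu; [left|right; right]; auto).
        apply Hiff, Hrep in Hu'. split; auto.
        destruct (u p) eqn:E; auto. exfalso. apply Hnot.
        rewrite <- (single_rep x u p Hh E Hu'). auto. }
      assert (length (map comp (l1 ++ l2)) <= a)%nat.
      { apply (card_ge _ _ _ Hca).
        - apply nodup_map_inj; [assumption|]. intros u v Hu Hv. apply Hinj; [apply Hav|apply Hav]; auto.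
        - intros u Hu. apply in_map_iff in Hu. destruct Hu as [e [<- He]].
          apply Hrep. destruct (Hav e He) as [H1 H2]. pose proof (Hcomp e H1). unfold v1. lra. }
      rewrite length_map in H. rewrite <- Hlen, Hl, length_app in *. simpl. lia. }
    destruct Ha, Hb; subst; lia.
  -
    destruct (x_small x Hh (x p) (Hpos p)) as [q0 Hq0].
    set (q := q0). assert (Hq : x q < x p) by (apply Hq0; unfold q; lia).
    set (M1 := fun k => ltb (x k) (x q)).
    assert (Hg1 : gapc x M1).
    { intros c Hc0 HcM. destruct (Rle_lt_dec c (x q)).
      - eapply Rle_trans; [apply Hgap; auto; eapply Rle_trans; [apply HcM|apply HleS]|].
        apply msum_le; auto. intros k Hk. unfold M1, ltb in *.
        destruct (Rlt_dec (x k) c); [|discriminate].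
        destruct (Rlt_dec (x k) (x q)); [auto|lra].
      - eapply Rle_trans; [apply HcM|]. apply msum_le; auto. intros k Hk. unfold M1, ltb in *.
        destruct (Rlt_dec (x k) (x q)); [|discriminate].
        destruct (Rlt_dec (x k) c); [auto|lra]. }
    destruct (kakeya x M1 Hh Hg1 (x q)) as [e1 [He1 He1s]].
    { split; [apply Rlt_le, Hpos|]. apply Hgap; [apply Hpos| rewrite <- (msum_single x q); apply HleS]. }
    assert (He1q : e1 q = false).
    { destruct (e1 q) eqn:E; auto. specialize (He1 q E). unfold M1, ltb in He1.
      destruct (Rlt_dec (x q) (x q)); [lra|discriminate]. }
    destruct (Hcard (x q)) as [bq [Hbq Hcbq]]; [split; [apply Rlt_le, Hpos|]; rewrite <- (msum_single x q); apply HleS|].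
    assert (H2q : (2 <= bq)%nat).
    { change 2%nat with (length ((fun n => Nat.eqb n q) :: e1 :: nil)).
      apply (card_ge _ _ _ Hcbq).
      - constructor.
        + intros [Hin|[]]. rewrite Hin in He1q; simpl in He1q. rewrite Nat.eqb_refl in He1q. discriminate.
        + constructor; [intros []|constructor].
      - intros u [<-|[<-|[]]]; apply Hrep; auto. apply msum_single. }
    assert (Hbqm : bq = m) by (destruct Hbq; subst; lia).
    set (M2 := fun k => negb (Nat.eqb k p)).
    assert (Hg2 : gapc x M2).
    { intros c Hc0 HcM. destruct (Rle_lt_dec c (x p)).
      - eapply Rle_trans; [apply Hgap; auto; eapply Rle_trans; [apply HcM|apply HleS]|].
        apply msum_le; auto. intros k Hk. unfold M2, ltb in *.
        destruct (Rlt_dec (x k) c); [|discriminate].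
        destruct (Nat.eqb_spec k p); [subst; lra|auto].
      - eapply Rle_trans; [apply HcM|]. apply msum_le; auto. intros k Hk. unfold M2, ltb in *.
        rewrite Hk. simpl. destruct (Rlt_dec (x k) c); auto. specialize (Hmax k). lra. }
    destruct (kakeya x M2 Hh Hg2 (x q + x p)) as [e2 [He2 He2s]].
    { change (msum x M2) with T. pose proof (Hpos q). pose proof (Hpos p). lra. }
    assert (He2p : e2 p = false).
    { destruct (e2 p) eqn:E; auto. specialize (He2 p E). unfold M2 in He2.
      rewrite Nat.eqb_refl in He2. discriminate. }
    destruct (Hcard (x q + x p)) as [c [Hcc Hccc]].
    { pose proof (Hpos q). pose proof (Hpos p). rewrite HST. lra. }
    set (add := fun (e : nat -> bool) n => e n || Nat.eqb n p).
    assert (Hle : (bq + 1 <= c)%nat).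
    { destruct Hcbq as [lq [Hnd [Hlen Hiff]]].
      assert (Hav : forall e, In e lq -> e p = false /\ msum x e = x q).
      { intros e He. apply Hiff, Hrep in He. split; auto. apply (avoid x e (x q) p Hh He Hq). }
      replace (bq + 1)%nat with (length (e2 :: map add lq)) by (simpl; rewrite length_map; lia).
      apply (card_ge _ _ _ Hccc).
      - constructor.
        + intros Hin. apply in_map_iff in Hin. destruct Hin as [e [He1' He2']].
          assert (H5 := f_equal (fun f => f p) He1'). unfold add in H5. simpl in H5.
          rewrite Nat.eqb_refl, orb_true_r in H5. congruence.
        + apply nodup_map_inj; [assumption|]. intros u v Hu Hv Huv.
          apply functional_extensionality. intros k.
          destruct (Nat.eqb_spec k p); [subst; rewrite (proj1 (Hav u Hu)), (proj1 (Hav v Hv)); auto|].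
          assert (H5 := f_equal (fun f => f k) Huv). unfold add in H5. simpl in H5.
          destruct (Nat.eqb_spec k p); [lia|]. rewrite !orb_false_r in H5. auto.
      - intros u [<-|Hu]; apply Hrep; auto.
        apply in_map_iff in Hu. destruct Hu as [e [<- He]].
        destruct (Hav e He) as [H1 H2]. unfold add. rewrite msum_disj; auto.
        + rewrite Hsp. lra.
        + intros k. destruct (Nat.eqb_spec k p); [subst; rewrite H1|]; auto; apply andb_false_r. }
    destruct Hcc; subst; lia.
Qed.
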